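(* Let $p\in[0,1)$, $\alpha\in[0,1]$, $0\le h_1<\dots<h_N\le1$, and nonnegative weights $f_0^S(h_j),f_0^{NS}(h_j)$, $j=1,\dots,N$, each summing to $1$; set $f_0(h_j)=\alpha f_0^S(h_j)+(1-\alpha)f_0^{NS}(h_j)$, assume $f_0(h_N)>0$, and let $f_0([h_i,1])=\sum_{j\ge i}f_0(h_j)$. Let $m_0^{S,j}\in[-1,1]$ be given. Let $f^{NS,1},\dots,f^{NS,N}\in C([0,+\infty),P([-1,1]))$ (weak topology) with initial data $f_0^{NS,i}$, write $m^{NS,j}(t)=\int_{-1}^1w\,f^{NS,j}(t,dw)$, $$m(t)=\alpha\sum_{j}f_0^S(h_j)m_0^{S,j}+(1-\alpha)\sum_jf_0^{NS}(h_j)m^{NS,j}(t),\quad \beta_i(t)=\alpha\sum_{j\ge i}f_0^S(h_j)m_0^{S,j}+(1-\alpha)\sum_{j\ge i}f_0^{NS}(h_j)m^{NS,j}(t),$$ and assume that for all $i$, $t\ge0$ and $\phi\in C^1([-1,1])$, $$\int\phi\,df^{NS,i}(t)=\int\phi\,df_0^{NS,i}+\int_0^t\!\!\int_{-1}^1\phi'(w)\Big[p\big(m(s)-w\big)+(1-p)\big(\beta_i(s)-f_0([h_i,1])w\big)\Big]f^{NS,i}(s,dw)\,ds.$$ Then for every $i=1,\dots,N$, $$\frac{d}{dt}m^{NS,i}(t)=\alpha\sum_{j=1}^Nm_0^{S,j}\big(p+(1-p)1_{\{j\ge i\}}\big)f_0^S(h_j)+(1-\alpha)\sum_{j=1}^N\big(p+(1-p)1_{\{j\ge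 i\}}\big)f_0^{NS}(h_j)m^{NS,j}(t)-\big(p+(1-p)f_0([h_i,1])\big)m^{NS,i}(t).$$
   Context: $P([-1,1])$ is the set of Borel probability measures on $[-1,1]$. Interpretation: $f^{NS,i}(t)$ is the opinion distribution of non-stubborn individuals at hierarchy level $h_i$, $m^{NS,i}$ its mean, $m_0^{S,j}$ the mean opinion of stubborn individuals at level $h_j$, $\alpha$ the fraction of stubborn individuals. *)

(* Defs.v *)
From HB Require Import structures.
From mathcomp Require Import all_boot all_order all_algebra.
From mathcomp Require Import all_classical all_reals all_analysis.
Set Implicit Arguments. Unset Strict Implicit. Unset Printing Implicit Defensive.
Import Order.TTheory GRing.Theory Num.Theory numFieldNormedType.Exports.
Local Open Scope classical_set_scope.
Local Open Scope ring_scope.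

Section Defs.
Variables (R : realType) (n : nat).

Definition f0 (alpha : R) (fS fNS : 'I_n -> R) (j : 'I_n) : R :=
  alpha * fS j + (1 - alpha) * fNS j.

Definition f0_tail (alpha : R) (fS fNS : 'I_n -> R) (i : 'I_n) : R :=
  \sum_(j < n | (i <= j)%N) f0 alpha fS fNS j.

Definition integ11 (mu : probability R R) (phi : R -> R) : R :=
  Rintegral mu `[-1, 1] phi.

Definition mean (mu : probability R R) : R := integ11 mu id.

Definition mtot (alpha : R) (fS fNS m0S mNS : 'I_n -> R) : R :=
  alpha * \sum_(j < n) fS j * m0S j + (1 - alpha) * \sum_(j < n) fNS j * mNS j.

Definition beta (alpha : R) (fS fNS m0S mNS : 'I_n -> R) (i : 'I_n) : R :=
  alpha * \sum_(j < n | (i <= j)%N) fS j * m0S j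
  + (1 - alpha) * \sum_(j < n | (i <= j)%N) fNS j * mNS j.

End Defs.

(* Main.v *)
Require Import Defs.
From HB Require Import structures.
From mathcomp Require Import all_boot all_order all_algebra.
From mathcomp Require Import all_classical all_reals all_analysis.
From mathcomp Require Import ring lra.
Import Order.TTheory GRing.Theory Num.Theory numFieldNormedType.Exports.
Local Open Scope classical_set_scope.
Local Open Scope ring_scope.

Section Aux.
Context {R : realType}.

Lemma int_id (mu : probability R R) :
  mu.-integrable `[-1, 1] (EFin \o (fun w : R => w)).
Proof.
apply: measurable_bounded_integrable => //.
- by rewrite (le_lt_trans (probability_le1 _ _)) ?ltry.
- exists 1; split; first exact: num_real.
  move=> M M1 x /=; rewrite in_itv /= => /andP[x1 x2].
  rewrite (le_trans _ (ltW M1))//; rewrite ler_norml; lra.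
Qed.

Lemma int_cst (mu : probability R R) (c : R) :
  mu.-integrable `[-1, 1] (EFin \o (fun w : R => c)).
Proof.
apply: measurable_bounded_integrable => //.
- by rewrite (le_lt_trans (probability_le1 _ _)) ?ltry.
- exact: bounded_cst.
Qed.

Lemma int_lin (mu : probability R R) (b : R) :
  mu.-integrable `[-1, 1] (EFin \o (fun w : R => b * w)).
Proof.
apply: measurable_bounded_integrable => //.
- by rewrite (le_lt_trans (probability_le1 _ _)) ?ltry.
- exact: measurable_realfun.mulrl_measurable.
- exists `|b|; split; first exact: num_real.
  move=> M M1 x /=; rewrite in_itv /= => /andP[x1 x2].
  rewrite (le_trans _ (ltW M1))// normrM ler_piMr //; rewrite ler_norml; lra.
Qed.

Lemma integ11_lin (mu : probability R R) (a b : R) :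
  mu `[-1, 1]%classic = 1%E ->
  integ11 mu (fun w => a - b * w) = a - b * mean mu.
Proof.
move=> H; rewrite /integ11 /mean RintegralB //; last first.
  exact: int_lin.
  exact: int_cst.
rewrite Rintegral_cst //.
have -> : fine (mu `[-1, 1]%classic) = 1 by rewrite H.
rewrite mulr1 RintegralZl //; exact: int_id.
Qed.

Lemma cont_sum (T : topologicalType) (I : Type) (r : seq I) (P : pred I)
  (g : I -> T -> R) : (forall j, continuous (g j)) ->
  continuous (fun t => \sum_(j <- r | P j) g j t).
Proof.
move=> Hg; elim: r => [|a r IH].
  under eq_fun do rewrite big_nil; exact: cst_continuous.
under eq_fun do rewrite big_cons.
case: (P a) => //.
move=> x; exact: (continuousD (Hg a x) (IH x)).
Qed.

Lemma sum_ind (k : nat) (p : R) (g : 'I_k -> R) (i : 'I_k) :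
  \sum_(j < k) (p + (1 - p) * ((i <= j)%N)%:R) * g j =
  p * \sum_(j < k) g j + (1 - p) * \sum_(j < k | (i <= j)%N) g j.
Proof.
rewrite !mulr_sumr (big_mkcond (fun j : 'I_k => (i <= j)%N)) -big_split /=; apply: eq_bigr => j _.
case: (i <= j)%N => /=; ring.
Qed.

Lemma alg (k : nat) (p alpha : R) (fS fNS m0S mv : 'I_k -> R) (i : 'I_k) (T : R) :
  (p * mtot alpha fS fNS m0S mv + (1 - p) * beta alpha fS fNS m0S mv i)
   - (p + (1 - p) * T) * mv i =
  alpha * \sum_(j < k) m0S j * (p + (1 - p) * ((i <= j)%N)%:R) * fS j
  + (1 - alpha) * \sum_(j < k) (p + (1 - p) * ((i <= j)%N)%:R) * fNS j * mv j
  - (p + (1 - p) * T) * mv i.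
Proof.
have -> : \sum_(j < k) m0S j * (p + (1 - p) * ((i <= j)%N)%:R) * fS j =
  \sum_(j < k) (p + (1 - p) * ((i <= j)%N)%:R) * (fS j * m0S j).
  by apply: eq_bigr => j _; ring.
have -> : \sum_(j < k) (p + (1 - p) * ((i <= j)%N)%:R) * fNS j * mv j =
  \sum_(j < k) (p + (1 - p) * ((i <= j)%N)%:R) * (fNS j * mv j).
  by apply: eq_bigr => j _; ring.
rewrite !sum_ind /mtot /beta; ring.
Qed.
End Aux.
Theorem proposition4p3 (R : realType) (n : nat) (p alpha : R)
  (h fS fNS m0S : 'I_n.+1 -> R) (f : 'I_n.+1 -> R -> probability R R) :
  0 <= p < 1 ->
  0 <= alpha <= 1 ->
  (forall j, 0 <= h j <= 1) ->
  (forall i j : 'I_n.+1, (i < j)%N -> h i < h j) ->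
  (forall j, 0 <= fS j) -> (forall j, 0 <= fNS j) ->
  \sum_(j < n.+1) fS j = 1 -> \sum_(j < n.+1) fNS j = 1 ->
  0 < f0 alpha fS fNS ord_max ->
  (forall j, -1 <= m0S j <= 1) ->
  (* f^{NS,i}(t) is a probability measure on [-1,1] *)
  (forall i t, 0 <= t -> f i t `[-1, 1]%classic = 1%E) ->
  (* weak continuity of t |-> f^{NS,i}(t) on [0,+oo) *)
  (forall i (phi : R -> R), continuous phi ->
     {within `[0, +oo[, continuous (fun t => integ11 (f i t) phi)}) ->
  (* weak formulation, for all C^1 test functions *)
  (forall i t (phi : R -> R), 0 <= t ->
     (forall x, derivable phi x 1) -> continuous (derive1 phi) ->
     integ11 (f i t) phi =
       integ11 (f i 0) phi
       + Rintegral lebesgue_measure `[0, t]%classic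
           (fun s => integ11 (f i s) (fun w =>
              derive1 phi w *
              (p * (mtot alpha fS fNS m0S (fun j => mean (f j s)) - w)
               + (1 - p) * (beta alpha fS fNS m0S (fun j => mean (f j s)) i
                            - f0_tail alpha fS fNS i * w))))) ->
  forall i : 'I_n.+1,
    let mNS := fun j t => mean (f j t) in
    let rhs := fun t =>
      alpha * \sum_(j < n.+1) m0S j * (p + (1 - p) * ((i <= j)%N)%:R) * fS j
      + (1 - alpha) * \sum_(j < n.+1) (p + (1 - p) * ((i <= j)%N)%:R) * fNS j * mNS j t
      - (p + (1 - p) * f0_tail alpha fS fNS i) * mNS i t in
    (forall t : R, 0 < t -> is_derive t 1 (mNS i) (rhs t)) /\
    ((fun s : R => s^-1 * (mNS i s - mNS i 0)) @ 0^'+ --> rhs 0).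
Proof.
move=> /andP[p0 p1] _ _ _ _ _ _ _ _ _ Hmass Hcont Hweak i mNS rhs.
have Hd1 : derive1 (@id R) = cst 1 by apply/funext => x; exact: derive1_id.
have Hrepr : forall t, 0 <= t ->
    mNS i t = mNS i 0 + Rintegral lebesgue_measure `[0, t]%classic rhs.
  move=> t t0.
  have := Hweak i t id t0 (fun x => @derivable_id _ _ x 1) _.
  rewrite Hd1 => /(_ (@cst_continuous _ _ _)).
  rewrite /mNS /mean => ->; congr (_ + _).
  apply: eq_Rintegral => s; rewrite inE /= in_itv /= => /andP[s0 _].
  set M := mtot _ _ _ _ _; set B := beta _ _ _ _ _ _; set T := f0_tail _ _ _ _.
  have -> : (fun w => 1 * (p * (M - w) + (1 - p) * (B - T * w))) =
            (fun w => (p * M + (1 - p) * B) - (p + (1 - p) * T) * w).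
    by apply/funext => w; ring.
  rewrite integ11_lin ?Hmass //.
  exact: (alg _ p alpha fS fNS m0S (fun j => mNS j s) i T).
have Hm : forall j, {within `[0, +oo[, continuous (mNS j)}.
  move=> j; apply: Hcont => x; exact: cvg_id.
have Hc : {within `[0, +oo[, continuous rhs}.
  rewrite /rhs => x.
  apply: cvgB; first apply: cvgD.
  - exact: cvg_cst.
  - apply: cvgM; first exact: cvg_cst.
    have HH := (@cont_sum _ (subspace (`[0, +oo[ : set R) : topologicalType) _ (index_enum 'I_n.+1) xpredT (fun j t => (p + (1 - p) * ((i <= j)%N)%:R) * fNS j * mNS j t)).
    refine (HH _ x).
    move=> j y; apply: cvgM; first exact: cvg_cst.
    exact: Hm.
  - apply: cvgM; first exact: cvg_cst.
    exact: Hm.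
have [Hin Hr0] := (continuous_within_itvcyP 0 rhs).1 Hc.
have Hcs : forall s, {within `[0, s], continuous rhs}.
  move=> s; apply: continuous_subspaceW Hc => x /=; rewrite !in_itv /= => /andP[-> _] //.
have Hint : forall s, lebesgue_measure.-integrable `[0, s] (EFin \o rhs).
  move=> s; apply: continuous_compact_integrable; first exact: segment_compact.
  exact: Hcs.
split.
  move=> t t0.
  have [dG G'] := @continuous_FTC1_closed R rhs 0 t (t + 1) ltac:(by rewrite ltrDl) (Hint _) t0
    (Hin t ltac:(by rewrite in_itv /= t0)).
  have HD : is_derive t 1 (fun x => mNS i 0 +
     Rintegral lebesgue_measure `[0, x]%classic rhs) (rhs t).
    have := is_deriveD (is_derive_cst (mNS i 0) t 1) (DeriveDef dG (esym (derive1E _ _))).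
    rewrite add0r G' => H; exact: H.
  apply: (near_eq_is_derive _ HD).
    have := lt_nbhsr t0; apply: filterS => x x0; by rewrite (Hrepr x (ltW x0)).
apply/cvgrPdist_le => e e0.
have := (cvgrPdist_le _ _).1 Hr0 e e0.
rewrite !near_withinE => H0.
have [d d0 Hd] := (nbhs_ballP _ _).1 (H0 _).
apply/(nbhs_ballP _ _).2; exists d => // s Hs s0.
rewrite (Hrepr s (ltW s0)).
set I := Rintegral _ _ _.
have -> : mNS i 0 + I - mNS i 0 = I by ring.
have Hleb : fine (lebesgue_measure `[0, s]%classic) = s.
  by rewrite lebesgue_measure_itv /= lte_fin s0 /= subr0.
have Hcst : forall c, lebesgue_measure.-integrable `[0, s] (EFin \o (fun _ => c)).
  move=> c; apply: continuous_compact_integrable; first exact: segment_compact.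
  move=> x; exact: cvg_cst.
have Hdiff : lebesgue_measure.-integrable `[0, s] (EFin \o (fun x => rhs x - rhs 0)).
  apply: continuous_compact_integrable; first exact: segment_compact.
  move=> x; apply: cvgB; [exact: Hcs | exact: cvg_cst].
have E1 : Rintegral lebesgue_measure `[0, s]%classic (fun x => rhs x - rhs 0)
    = I - rhs 0 * s.
  rewrite RintegralB //.
  by rewrite Rintegral_cst // Hleb.
have E2 : `|Rintegral lebesgue_measure `[0, s]%classic (fun x => rhs x - rhs 0)|
    <= e * s.
  apply: le_trans (le_normr_Rintegral _ Hdiff) _ => //.
  have -> : e * s = Rintegral lebesgue_measure `[0, s]%classic (fun _ => e).
    by rewrite Rintegral_cst // Hleb.
  apply: le_Rintegral => //; [exact: integrable_norm Hdiff | ].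
  move=> x; rewrite /= in_itv /= => /andP[x0 xs].
  rewrite distrC; case: (eqVneq x 0) => [->|xn0]; first by rewrite subrr normr0 ltW.
  apply: Hd; last by rewrite lt_neqAle eq_sym xn0 x0.
  move: Hs; rewrite /ball /= !sub0r !normrN gtr0_norm // => Hs.
  by rewrite ger0_norm // (le_lt_trans xs).
have -> : rhs 0 - s^-1 * I =
   - (s^-1 * Rintegral lebesgue_measure `[0, s]%classic (fun x => rhs x - rhs 0)).
  by rewrite E1; field; rewrite gt_eqF.
rewrite normrN normrM gtr0_norm ?invr_gt0 // mulrC ler_pdivrMr //.
Qed.
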